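(* Let $g_y(\omega)=\frac{\sigma_\epsilon^2}{2\pi}|\kappa(e^{i\omega})|^2$, $-\pi\le\omega\le\pi$, where $\sigma_\epsilon^2>0$ and $\kappa(z)=\sum_{s\ge0}\kappa_sz^s$ with $\kappa_0=1$, $\sum_s|\kappa_s|<\infty$ and $\kappa(z)\ne0$ for $|z|\le1$, so that $0<m\le g_y(\omega)\le M<\infty$ for all $\omega$, for some constants $m,M$. For $\beta\in[0,1]$ and $\theta\in\Theta=(-1,1)$ let $$f(\theta,\beta)=-\int_{-\pi}^{\pi}\frac{e^{i\omega}+\beta\theta}{|(1+\theta e^{i\omega})(1+\beta\theta e^{i\omega})|^2}\,g_y(\omega)\,d\omega,\qquad \bar L(\theta)=\int_{-\pi}^{\pi}\frac{g_y(\omega)}{|1+\theta e^{i\omega}|^2}\,d\omega .$$ Then for each $\beta\in[0,1]$, $f(\cdot,\beta)$ is infinitely differentiable on $\Theta$, and $\Theta_0^\beta=\{\theta\in\Theta: f(\theta,\beta)=0\}$ is a nonempty compact subset of $\Theta$. In the case $\beta=1$, $\Theta_0^1$ contains the (nonempty) set of minimizers of $\bar L$ over $\Theta$. *)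

(* Defs.v *)
From Stdlib Require Import Reals Rtopology.
From Coquelicot Require Import Coquelicot.
Open Scope R_scope.

Definition cis (w : R) : C := (cos w, sin w).

Definition RIntC (h : R -> C) (a b : R) : C :=
  (RInt (fun x => Re (h x)) a b, RInt (fun x => Im (h x)) a b).

Definition kappa_fun (kappa : nat -> R) (z : C) : C :=
  (Series (fun s => Re (RtoC (kappa s) * Cpow z s)%C),
   Series (fun s => Im (RtoC (kappa s) * Cpow z s)%C)).

Definition g_y (sigma2 : R) (kappa : nat -> R) (w : R) : R :=
  sigma2 / (2 * PI) * (Cmod (kappa_fun kappa (cis w))) ^ 2.

Definition f_est (sigma2 : R) (kappa : nat -> R) (theta beta : R) : C :=
  Copp (RIntC (fun w =>
    Cmult (Cdiv (Cplus (cis w) (RtoC (beta * theta)))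
                (RtoC ((Cmod (Cmult (Cplus (RtoC 1) (Cmult (RtoC theta) (cis w)))
                                     (Cplus (RtoC 1) (Cmult (RtoC (beta * theta)) (cis w))))) ^ 2)))
          (RtoC (g_y sigma2 kappa w)))
    (- PI) PI).

Definition Lbar (sigma2 : R) (kappa : nat -> R) (theta : R) : R :=
  RInt (fun w => g_y sigma2 kappa w /
                 (Cmod (Cplus (RtoC 1) (Cmult (RtoC theta) (cis w)))) ^ 2) (- PI) PI.

Definition in_Theta (theta : R) : Prop := -1 < theta < 1.

Definition Theta0 (sigma2 : R) (kappa : nat -> R) (beta : R) : R -> Prop :=
  fun theta => in_Theta theta /\ f_est sigma2 kappa theta beta = RtoC 0.

Definition smooth_on_Theta (h : R -> C) : Prop :=
  forall (n : nat) (theta : R), in_Theta theta ->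
    ex_derive_n (fun t => Re (h t)) n theta /\ ex_derive_n (fun t => Im (h t)) n theta.

(* Main.v *)
Require Import Defs.
From Stdlib Require Import Reals Rtopology Lra Lia.
From Coquelicot Require Import Coquelicot.
Open Scope R_scope.

Lemma Theta_open : open in_Theta.
Proof. unfold in_Theta. apply open_and; [apply open_gt | apply open_lt]. Qed.

Lemma Theta_loc θ : in_Theta θ -> locally θ in_Theta.
Proof. intros H; apply Theta_open; exact H. Qed.

Lemma Theta_ball θ : in_Theta θ -> exists d : posreal, forall t, Rabs (t - θ) < d -> in_Theta t.
Proof. intros H; destruct (Theta_loc θ H) as [d Hd]. exists d; intros t Ht; apply Hd; exact Ht. Qed.

Definition C0 (φ : R -> R -> R) : Prop := forall θ w, in_Theta θ -> continuity_2d_pt φ θ w.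
Definition dT (φ : R -> R -> R) : R -> R -> R := fun u v => Derive (fun z => φ z v) u.

Fixpoint Sn (n : nat) (φ : R -> R -> R) : Prop :=
  match n with
  | O => C0 φ
  | S n => C0 φ /\ (forall θ w, in_Theta θ -> ex_derive (fun t => φ t w) θ) /\ Sn n (dT φ)
  end.

Definition Sm φ := forall n, Sn n φ.

Lemma Sn_C0 n φ : Sn n φ -> C0 φ.
Proof. destruct n; simpl; tauto. Qed.

Lemma Sn_ext n : forall φ χ, (forall θ w, in_Theta θ -> φ θ w = χ θ w) -> Sn n φ -> Sn n χ.
Proof.
  assert (HC : forall φ χ, (forall θ w, in_Theta θ -> φ θ w = χ θ w) -> C0 φ -> C0 χ).
  { intros φ χ E H θ w Hθ. apply continuity_2d_pt_ext_loc with φ; [|apply H; exact Hθ].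
    destruct (Theta_ball θ Hθ) as [d Hd]. exists d. intros u v Hu _. apply E, Hd, Hu. }
  induction n as [|n IH]; intros φ χ E; simpl.
  - apply HC; exact E.
  - intros [H1 [H2 H3]]. split; [apply (HC φ); auto|]. split.
    + intros θ w Hθ. apply ex_derive_ext_loc with (fun t => φ t w); [|apply H2; exact Hθ].
      generalize (Theta_loc θ Hθ); apply filter_imp. intros t Ht; apply E; exact Ht.
    + apply IH with (dT φ); [|exact H3]. intros θ w Hθ. unfold dT.
      apply Derive_ext_loc. generalize (Theta_loc θ Hθ); apply filter_imp. intros t Ht; apply E; exact Ht.
Qed.

Lemma Sn_mono n : forall φ, Sn (S n) φ -> Sn n φ.
Proof.
  induction n as [|n IH]; intros φ H; simpl in *.
  - tauto.
  - destruct H as [H1 [H2 H3]]. split; [exact H1|]. split; [exact H2|]. apply IH; exact H3.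
Qed.

Lemma Sn_plus n : forall φ ψ, Sn n φ -> Sn n ψ -> Sn n (fun u v => φ u v + ψ u v).
Proof.
  induction n as [|n IH]; intros φ ψ Hφ Hψ; simpl in *.
  - intros θ w Hθ; apply continuity_2d_pt_plus; auto.
  - destruct Hφ as [A1 [A2 A3]]; destruct Hψ as [B1 [B2 B3]].
    split; [intros θ w Hθ; apply continuity_2d_pt_plus; auto|]. split.
    + intros θ w Hθ. apply (ex_derive_plus (fun t => φ t w) (fun t => ψ t w)); auto.
    + apply Sn_ext with (fun u v => dT φ u v + dT ψ u v); [|apply IH; auto].
      intros θ w Hθ; unfold dT. rewrite Derive_plus; auto.
Qed.

Lemma Sn_mult n : forall φ ψ, Sn n φ -> Sn n ψ -> Sn n (fun u v => φ u v * ψ u v).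
Proof.
  induction n as [|n IH]; intros φ ψ Hφ Hψ.
  - simpl in *. intros θ w Hθ; apply continuity_2d_pt_mult; auto.
  - pose proof (Sn_mono _ _ Hφ) as Mφ. pose proof (Sn_mono _ _ Hψ) as Mψ.
    simpl in Hφ, Hψ. destruct Hφ as [A1 [A2 A3]]; destruct Hψ as [B1 [B2 B3]].
    simpl. split; [intros θ w Hθ; apply continuity_2d_pt_mult; auto|]. split.
    + intros θ w Hθ. apply ex_derive_mult; auto.
    + apply Sn_ext with (fun u v => dT φ u v * ψ u v + φ u v * dT ψ u v).
      * intros θ w Hθ; unfold dT. rewrite Derive_mult; auto.
      * apply Sn_plus; apply IH; auto.
Qed.

Lemma Sn_const n : forall c, Sn n (fun _ _ => c).
Proof.
  induction n as [|n IH]; intros c; simpl.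
  - intros θ w _; apply continuity_2d_pt_const.
  - split; [intros θ w _; apply continuity_2d_pt_const|]. split.
    + intros; apply ex_derive_const.
    + apply Sn_ext with (fun _ _ => 0); [|apply IH]. intros; unfold dT; rewrite Derive_const; auto.
Qed.

Lemma Sn_id1 n : Sn n (fun u _ => u).
Proof.
  destruct n as [|n]; simpl.
  - intros θ w _; apply continuity_2d_pt_id1.
  - split; [intros θ w _; apply continuity_2d_pt_id1|]. split.
    + intros; apply ex_derive_id.
    + apply Sn_ext with (fun _ _ => 1); [|apply Sn_const]. intros; unfold dT.
      rewrite Derive_id; auto.
Qed.

Lemma Sn_w n h : (forall v, continuity_pt h v) -> Sn n (fun _ v => h v).
Proof.
  intros Hh. destruct n as [|n]; simpl.
  - intros θ w _; apply continuity_1d_2d_pt_comp with (g := fun _ v => v); [apply Hh|apply continuity_2d_pt_id2].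
  - split; [intros θ w _; apply continuity_1d_2d_pt_comp with (g := fun _ v => v); [apply Hh|apply continuity_2d_pt_id2]|]. split.
    + intros; apply ex_derive_const.
    + apply Sn_ext with (fun _ _ => 0); [|apply Sn_const]. intros; unfold dT.
      rewrite Derive_const; auto.
Qed.

Lemma Sn_inv n : forall φ, (forall θ w, in_Theta θ -> φ θ w <> 0) -> Sn n φ -> Sn n (fun u v => / φ u v).
Proof.
  induction n as [|n IH]; intros φ Hnz Hφ.
  - simpl in *. intros θ w Hθ; apply continuity_2d_pt_inv; auto.
  - pose proof (Sn_mono _ _ Hφ) as Mφ.
    simpl in Hφ. destruct Hφ as [A1 [A2 A3]].
    simpl. split; [intros θ w Hθ; apply continuity_2d_pt_inv; auto|]. split.
    + intros θ w Hθ. apply (ex_derive_inv (fun t => φ t w)); auto.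
    + apply Sn_ext with (fun u v => ((fun _ _ => -1) u v * dT φ u v) * (/ φ u v) * (/ φ u v)).
      * intros θ w Hθ; unfold dT. rewrite (Derive_inv (fun t => φ t w)); auto.
        field. auto.
      * apply Sn_mult; [apply Sn_mult|]; [apply Sn_mult; [apply Sn_const|exact A3]| |]; apply IH; auto.
Qed.

Lemma Sm_plus φ ψ : Sm φ -> Sm ψ -> Sm (fun u v => φ u v + ψ u v).
Proof. intros A B n; apply Sn_plus; auto. Qed.
Lemma Sm_mult φ ψ : Sm φ -> Sm ψ -> Sm (fun u v => φ u v * ψ u v).
Proof. intros A B n; apply Sn_mult; auto. Qed.
Lemma Sm_const c : Sm (fun _ _ => c).
Proof. intros n; apply Sn_const. Qed.
Lemma Sm_id1 : Sm (fun u _ => u).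
Proof. intros n; apply Sn_id1. Qed.
Lemma Sm_w h : (forall v, continuity_pt h v) -> Sm (fun _ v => h v).
Proof. intros H n; apply Sn_w; auto. Qed.
Lemma Sm_inv φ : (forall θ w, in_Theta θ -> φ θ w <> 0) -> Sm φ -> Sm (fun u v => / φ u v).
Proof. intros H A n; apply Sn_inv; auto. Qed.
Lemma Sm_ext φ χ : (forall θ w, in_Theta θ -> φ θ w = χ θ w) -> Sm φ -> Sm χ.
Proof. intros H A n; apply Sn_ext with φ; auto. Qed.
Lemma Sm_dT φ : Sm φ -> Sm (dT φ).
Proof. intros A n. exact (proj2 (proj2 (A (S n)))). Qed.
Lemma Sm_ex_derive φ : Sm φ -> forall θ w, in_Theta θ -> ex_derive (fun t => φ t w) θ.
Proof. intros A. exact (proj1 (proj2 (A 1%nat))). Qed.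
Lemma Sm_C0 φ : Sm φ -> C0 φ.
Proof. intros A. exact (A 0%nat). Qed.

Lemma c2d_cont2 f x y : continuity_2d_pt f x y -> continuous (f x) y.
Proof.
  intros H. apply continuity_pt_filterlim. apply continuity_pt_locally. intros eps.
  destruct (H eps) as [d Hd]. exists d. intros v Hv. apply Hd.
  - rewrite Rminus_eq_0, Rabs_R0; apply cond_pos.
  - exact Hv.
Qed.

Definition IPhi (φ : R -> R -> R) (θ : R) : R := RInt (fun w => φ θ w) (-PI) PI.

Lemma C0_exRInt φ θ a b : C0 φ -> in_Theta θ -> ex_RInt (fun w => φ θ w) a b.
Proof. intros H Hθ. apply (ex_RInt_continuous (V := R_CompleteNormedModule)). intros z _. apply c2d_cont2, H, Hθ. Qed.

Lemma IPhi_derive φ θ : Sm φ -> in_Theta θ -> is_derive (IPhi φ) θ (IPhi (dT φ) θ).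
Proof.
  intros A Hθ. unfold IPhi, dT.
  apply (is_derive_RInt_param φ (-PI) PI θ).
  - generalize (Theta_loc θ Hθ); apply filter_imp. intros x Hx t _. apply Sm_ex_derive; auto.
  - intros t _. apply (Sm_C0 _ (Sm_dT _ A)); auto.
  - generalize (Theta_loc θ Hθ); apply filter_imp. intros x Hx. apply C0_exRInt; auto. apply Sm_C0; auto.
Qed.

Lemma IPhi_Dn n : forall φ, Sm φ -> exists ψ, Sm ψ /\ forall θ, in_Theta θ -> Derive_n (IPhi φ) n θ = IPhi ψ θ.
Proof.
  induction n as [|n IH]; intros φ A.
  - exists φ; split; auto.
  - destruct (IH φ A) as [ψ [B E]]. exists (dT ψ). split; [apply Sm_dT; auto|].
    intros θ Hθ. simpl. rewrite (Derive_ext_loc _ (IPhi ψ)).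
    + apply is_derive_unique, IPhi_derive; auto.
    + generalize (Theta_loc θ Hθ); apply filter_imp. intros t Ht; apply E; auto.
Qed.

Lemma IPhi_exn n φ θ : Sm φ -> in_Theta θ -> ex_derive_n (IPhi φ) n θ.
Proof.
  intros A Hθ. destruct n as [|n]; simpl; auto.
  destruct (IPhi_Dn n φ A) as [ψ [B E]].
  apply ex_derive_ext_loc with (IPhi ψ).
  - generalize (Theta_loc θ Hθ); apply filter_imp. intros t Ht; symmetry; apply E; auto.
  - eexists; apply IPhi_derive; auto.
Qed.

Lemma series_cont (fn : nat -> R -> R) (b : nat -> R) :
  (forall s w, Rabs (fn s w) <= b s) -> ex_series b -> (forall s w, continuity_pt (fn s) w) ->
  forall w, continuity_pt (fun w => Series (fun s => fn s w)) w.
Proof.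
  intros Hb Eb Hc w.
  assert (Ef : forall y, ex_series (fun s => fn s y)).
  { intros y. apply ex_series_Rabs. apply (ex_series_le (V := R_CompleteNormedModule)) with b; auto.
    intros n. unfold norm; simpl. rewrite Rabs_Rabsolu. apply Hb. }
  apply (CVU_continuity (fun N y => sum_f_R0 (fun s => fn s y) N) _ w (mkposreal 1 Rlt_0_1)).
  2: { intros n y _. induction n as [|n IH]; simpl; [apply Hc|].
       apply continuity_pt_plus; auto. }
  2: { unfold Boule; simpl. rewrite Rminus_eq_0, Rabs_R0; lra. }
  intros eps Heps.
  destruct Eb as [l Hl]. pose proof Hl as Hl'. apply is_series_Reals in Hl.
  destruct (Hl eps Heps) as [N HN]. exists N. intros n y Hn _.
  assert (Eb : ex_series b) by (exists l; auto).
  rewrite (Series_incr_n (fun s => fn s y) (S n)); [|lia|apply Ef]. simpl pred.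
  replace (sum_f_R0 (fun s : nat => fn s y) n + Series (fun k : nat => fn (S n + k)%nat y) -
   sum_f_R0 (fun s : nat => fn s y) n) with (Series (fun k : nat => fn (S n + k)%nat y)) by ring.
  assert (Et : ex_series (fun k => b (S n + k)%nat)) by (apply (ex_series_incr_n b (S n)); auto).
  eapply Rle_lt_trans. apply Series_Rabs.
  { apply (ex_series_le (V := R_CompleteNormedModule)) with (fun k => b (S n + k)%nat); auto.
    intros k. unfold norm; simpl. rewrite Rabs_Rabsolu. apply Hb. }
  eapply Rle_lt_trans. apply Series_le with (b := fun k => b (S n + k)%nat); auto.
  { intros k; split; [apply Rabs_pos|apply Hb]. }
  pose proof (is_series_unique _ _ Hl') as U.
  rewrite (Series_incr_n b (S n)) in U; [|lia|auto]. simpl pred in U.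
  specialize (HN n Hn). unfold R_dist in HN. rewrite <- U in HN.
  rewrite Rabs_minus_sym in HN.
  replace (sum_f_R0 b n + Series (fun k : nat => b (S n + k)%nat) - sum_f_R0 b n) with
    (Series (fun k : nat => b (S n + k)%nat)) in HN by ring.
  eapply Rle_lt_trans; [apply Rle_abs|exact HN].
Qed.

Lemma Cpow_cis w n : Cpow (cis w) n = cis (INR n * w).
Proof.
  induction n as [|n IH].
  - simpl. unfold cis. rewrite Rmult_0_l, cos_0, sin_0. reflexivity.
  - simpl Cpow. rewrite IH, S_INR. unfold cis, Cmult; simpl.
    replace ((INR n + 1) * w) with (w + INR n * w) by ring.
    rewrite cos_plus, sin_plus. f_equal; ring.
Qed.

Definition KA (κ : nat -> R) w := Series (fun s => κ s * cos (INR s * w)).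
Definition KB (κ : nat -> R) w := Series (fun s => κ s * sin (INR s * w)).

Lemma kappa_cis κ w : kappa_fun κ (cis w) = (KA κ w, KB κ w).
Proof.
  unfold kappa_fun, KA, KB. f_equal; apply Series_ext; intros s; rewrite Cpow_cis;
  unfold cis, RtoC, Cmult; simpl; ring.
Qed.

Lemma Cmod2 (z : C) : Cmod z ^ 2 = fst z ^ 2 + snd z ^ 2.
Proof. unfold Cmod. rewrite pow2_sqrt; [reflexivity|]. nra. Qed.

Lemma g_y_eq σ κ w : g_y σ κ w = σ / (2 * PI) * (KA κ w ^ 2 + KB κ w ^ 2).
Proof. unfold g_y. rewrite kappa_cis, Cmod2. reflexivity. Qed.

Lemma KA_even κ w : KA κ (- w) = KA κ w.
Proof. unfold KA. apply Series_ext; intros s. rewrite <- Ropp_mult_distr_r, cos_neg; auto. Qed.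

Lemma KB_odd κ w : KB κ (- w) = - KB κ w.
Proof. unfold KB. rewrite <- Series_opp. apply Series_ext; intros s. rewrite <- Ropp_mult_distr_r, sin_neg; ring. Qed.

Lemma g_y_even σ κ w : g_y σ κ (- w) = g_y σ κ w.
Proof. rewrite !g_y_eq, KA_even, KB_odd. ring. Qed.

Lemma KA_cont κ : ex_series (fun s => Rabs (κ s)) -> forall w, continuity_pt (KA κ) w.
Proof.
  intros E w. apply (series_cont (fun s w => κ s * cos (INR s * w)) (fun s => Rabs (κ s))); auto.
  - intros s v. rewrite Rabs_mult. pose proof (COS_bound (INR s * v)).
    assert (Rabs (cos (INR s * v)) <= 1) by (apply Rabs_le; lra).
    pose proof (Rabs_pos (κ s)). nra.
  - intros s v. apply continuity_pt_mult; [apply continuity_pt_const; intros ? ?; auto|].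
    apply (continuity_pt_comp (fun v => INR s * v) cos); [|apply continuity_cos].
    apply continuity_pt_mult; [apply continuity_pt_const; intros ? ?; auto|apply continuity_pt_id].
Qed.

Lemma KB_cont κ : ex_series (fun s => Rabs (κ s)) -> forall w, continuity_pt (KB κ) w.
Proof.
  intros E w. apply (series_cont (fun s w => κ s * sin (INR s * w)) (fun s => Rabs (κ s))); auto.
  - intros s v. rewrite Rabs_mult. pose proof (SIN_bound (INR s * v)).
    assert (Rabs (sin (INR s * v)) <= 1) by (apply Rabs_le; lra).
    pose proof (Rabs_pos (κ s)). nra.
  - intros s v. apply continuity_pt_mult; [apply continuity_pt_const; intros ? ?; auto|].
    apply (continuity_pt_comp (fun v => INR s * v) sin); [|apply continuity_sin].
    apply continuity_pt_mult; [apply continuity_pt_const; intros ? ?; auto|apply continuity_pt_id].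
Qed.

Lemma g_y_cont σ κ : ex_series (fun s => Rabs (κ s)) -> forall w, continuity_pt (g_y σ κ) w.
Proof.
  intros E w. apply continuity_pt_ext with (fun w => σ / (2 * PI) * (KA κ w ^ 2 + KB κ w ^ 2)).
  { intros; symmetry; apply g_y_eq. }
  apply continuity_pt_mult; [apply continuity_pt_const; intros ? ?; auto|].
  assert (HA := KA_cont κ E). assert (HB := KB_cont κ E).
  apply continuity_pt_plus; simpl; apply continuity_pt_mult; auto;
  apply continuity_pt_mult; auto; apply continuity_pt_const; intros ? ?; auto.
Qed.

Lemma g_y_pos σ κ w : 0 < σ -> (forall z : C, Cmod z <= 1 -> kappa_fun κ z <> RtoC 0) -> 0 < g_y σ κ w.
Proof.
  intros Hσ Hk. rewrite g_y_eq. apply Rmult_lt_0_compat.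
  { apply Rdiv_lt_0_compat; [exact Hσ|]. pose proof PI_RGT_0. lra. }
  destruct (Req_dec (KA κ w ^ 2 + KB κ w ^ 2) 0) as [E|E]; [|nra].
  exfalso. apply (Hk (cis w)).
  - unfold Cmod, cis; simpl fst; simpl snd. rewrite <- (sqrt_1). apply Req_le. f_equal.
    pose proof (sin2_cos2 w) as H. unfold Rsqr in H. lra.
  - rewrite kappa_cis. unfold RtoC. f_equal; nra.
Qed.

Definition D1 θ w := 1 + 2 * θ * cos w + θ ^ 2.

Lemma D1_alt θ w : D1 θ w = (θ + cos w) ^ 2 + sin w ^ 2.
Proof. unfold D1. pose proof (sin2_cos2 w) as H. unfold Rsqr in H. nra. Qed.

Lemma D1_pos θ w : -1 < θ < 1 -> 0 < D1 θ w.
Proof.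
  intros H. unfold D1. pose proof (COS_bound w).
  destruct (Rle_dec 0 θ); nra.
Qed.

Lemma Cmod_D1 θ w : Cmod (Cplus (RtoC 1) (Cmult (RtoC θ) (cis w))) ^ 2 = D1 θ w.
Proof.
  rewrite Cmod2. unfold D1, cis, RtoC, Cplus, Cmult; simpl.
  pose proof (sin2_cos2 w) as H. unfold Rsqr in H. nra.
Qed.

Lemma Cdiv_real (a b r G : R) : r <> 0 ->
  Cmult (Cdiv (a, b) (RtoC r)) (RtoC G) = (a / r * G, b / r * G).
Proof.
  intros Hr. unfold Cdiv, Cmult, Cinv, RtoC; simpl. f_equal; field; auto.
Qed.

Definition Fre σ κ β θ w := (cos w + β * θ) / (D1 θ w * D1 (β * θ) w) * g_y σ κ w.
Definition Fim σ κ β θ w := sin w / (D1 θ w * D1 (β * θ) w) * g_y σ κ w.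

Lemma bt_Theta β θ : 0 <= β <= 1 -> in_Theta θ -> -1 < β * θ < 1.
Proof. unfold in_Theta; intros; destruct (Rle_dec 0 θ); nra. Qed.

Lemma integrand_eq σ κ β θ w : 0 <= β <= 1 -> in_Theta θ ->
  Cmult (Cdiv (Cplus (cis w) (RtoC (β * θ)))
                (RtoC ((Cmod (Cmult (Cplus (RtoC 1) (Cmult (RtoC θ) (cis w)))
                                     (Cplus (RtoC 1) (Cmult (RtoC (β * θ)) (cis w))))) ^ 2)))
          (RtoC (g_y σ κ w)) = (Fre σ κ β θ w, Fim σ κ β θ w).
Proof.
  intros Hβ Hθ. rewrite Cmod_mult, Rpow_mult_distr, !Cmod_D1.
  assert (0 < D1 θ w) by (apply D1_pos; exact Hθ).
  assert (0 < D1 (β * θ) w) by (apply D1_pos, bt_Theta; auto).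
  replace (Cplus (cis w) (RtoC (β * θ))) with (cos w + β * θ, sin w)
    by (unfold cis, Cplus, RtoC; simpl; f_equal; ring).
  rewrite Cdiv_real; [reflexivity|]. apply Rgt_not_eq; apply Rmult_lt_0_compat; auto.
Qed.

Lemma f_est_eq σ κ β θ : 0 <= β <= 1 -> in_Theta θ ->
  f_est σ κ θ β = (- IPhi (Fre σ κ β) θ, - IPhi (Fim σ κ β) θ).
Proof.
  intros Hβ Hθ. unfold f_est, RIntC, Copp, IPhi; cbn [fst snd]. f_equal; f_equal;
  apply RInt_ext; intros x _; rewrite integrand_eq; auto.
Qed.

Section Smooth.
Variable σ : R.
Variable κ : nat -> R.
Hypothesis Hκ : ex_series (fun s => Rabs (κ s)).

Lemma Sm_D1 β : Sm (fun u v => D1 (β * u) v).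
Proof.
  apply Sm_ext with (fun u v => (fun _ _ => 1) u v + ((fun _ _ => 2 * β) u v * (fun u _ => u) u v) * (fun _ v => cos v) u v
     + ((fun _ _ => β) u v * (fun u _ => u) u v) * ((fun _ _ => β) u v * (fun u _ => u) u v)).
  { intros; unfold D1; ring. }
  apply Sm_plus; [apply Sm_plus|]; repeat apply Sm_mult; try apply Sm_const; try apply Sm_id1.
  apply Sm_w; intros; apply continuity_cos.
Qed.

Lemma Sm_g : Sm (fun _ v => g_y σ κ v).
Proof. apply Sm_w. apply g_y_cont; auto. Qed.

Lemma Sm_Fre β : 0 <= β <= 1 -> Sm (Fre σ κ β).
Proof.
  intros Hβ. unfold Fre.
  apply Sm_ext with (fun u v => ((fun _ v => cos v) u v + (fun _ _ => β) u v * (fun u _ => u) u v) *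
      (/ ((fun u v => D1 (1 * u) v) u v * (fun u v => D1 (β * u) v) u v)) * g_y σ κ v).
  { intros θ w _. rewrite Rmult_1_l. unfold Rdiv. ring. }
  apply Sm_mult; [apply Sm_mult|apply Sm_g].
  - apply Sm_plus; [apply Sm_w; intros; apply continuity_cos|apply Sm_mult; [apply Sm_const|apply Sm_id1]].
  - apply Sm_inv; [|apply Sm_mult; apply Sm_D1].
    intros θ w Hθ. apply Rgt_not_eq, Rmult_lt_0_compat; apply D1_pos; apply bt_Theta; auto; lra.
Qed.

Lemma Sm_Fim β : 0 <= β <= 1 -> Sm (Fim σ κ β).
Proof.
  intros Hβ. unfold Fim.
  apply Sm_ext with (fun u v => ((fun _ v => sin v) u v) *
      (/ ((fun u v => D1 (1 * u) v) u v * (fun u v => D1 (β * u) v) u v)) * g_y σ κ v).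
  { intros θ w _. rewrite Rmult_1_l. unfold Rdiv. ring. }
  apply Sm_mult; [apply Sm_mult|apply Sm_g].
  - apply Sm_w; intros; apply continuity_sin.
  - apply Sm_inv; [|apply Sm_mult; apply Sm_D1].
    intros θ w Hθ. apply Rgt_not_eq, Rmult_lt_0_compat; apply D1_pos; apply bt_Theta; auto; lra.
Qed.

End Smooth.

Lemma IPhi_opp φ t : C0 φ -> in_Theta t -> IPhi (fun u v => - φ u v) t = - IPhi φ t.
Proof. intros H Ht. unfold IPhi. apply (RInt_opp (V := R_CompleteNormedModule)). apply C0_exRInt; auto. Qed.

Lemma Sm_opp φ : Sm φ -> Sm (fun u v => - φ u v).
Proof. intros A. apply Sm_ext with (fun u v => (fun _ _ => -1) u v * φ u v); [intros; ring|]. apply Sm_mult; auto; apply Sm_const. Qed.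

Lemma smooth_f σ κ β : ex_series (fun s => Rabs (κ s)) -> 0 <= β <= 1 ->
  smooth_on_Theta (fun θ => f_est σ κ θ β).
Proof.
  intros Hκ Hβ n θ Hθ. split.
  - apply ex_derive_n_ext_loc with (IPhi (fun u v => - Fre σ κ β u v)).
    + generalize (Theta_loc θ Hθ); apply filter_imp. intros t Ht.
      rewrite f_est_eq, IPhi_opp; auto. apply Sm_C0, Sm_Fre; auto.
    + apply IPhi_exn; auto. apply Sm_opp, Sm_Fre; auto.
  - apply ex_derive_n_ext_loc with (IPhi (fun u v => - Fim σ κ β u v)).
    + generalize (Theta_loc θ Hθ); apply filter_imp. intros t Ht.
      rewrite f_est_eq, IPhi_opp; auto. apply Sm_C0, Sm_Fim; auto.
    + apply IPhi_exn; auto. apply Sm_opp, Sm_Fim; auto.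
Qed.

Definition Ec t c := 1 + 2 * t * c + t ^ 2.
Definition Fc β θ c := (c + β * θ) / (Ec θ c * Ec (β * θ) c).

Lemma le_div_l a b c : 0 < b -> a <= c * b -> a / b <= c.
Proof. intros Hb H. apply (Rmult_le_reg_r b); auto. unfold Rdiv. rewrite Rmult_assoc, Rinv_l; lra. Qed.

Lemma Ec_pos t c : -1 < t < 1 -> -1 <= c <= 1 -> 0 < Ec t c.
Proof. intros Ht Hc. unfold Ec. destruct (Rle_dec 0 t); nra. Qed.

Lemma Fc_nonpos β θ c : Ec θ c * Ec (β * θ) c > 0 -> c + β * θ <= 0 -> Fc β θ c <= 0.
Proof. intros H1 H2. unfold Fc. apply le_div_l; lra. Qed.

Lemma Fc_upper_lt1 β θ c : 0 <= β < 1 -> 1/2 <= θ < 1 -> -1 <= c <= 1 ->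
  Fc β θ c <= 2 / (1 - β) ^ 3.
Proof.
  intros Hb Ht Hc.
  assert (Hk : 0 < 2 / (1 - β) ^ 3) by (apply Rdiv_lt_0_compat; [lra|apply pow_lt; lra]).
  assert (Hk2 : 2 / (1 - β) ^ 3 * (1 - β) ^ 3 = 2) by (field; lra).
  set (k := 2 / (1 - β) ^ 3) in *.
  assert (HE1 : Ec θ c >= (1 - θ) ^ 2 + 2 * θ * (1 + c)) by (unfold Ec; nra).
  assert (HE2 : Ec (β * θ) c >= (1 - β * θ) ^ 2 + 2 * β * θ * (1 + c)) by (unfold Ec; nra).
  destruct (Rle_dec (c + β * θ) 0) as [N|N].
  - assert (0 < Ec θ c * Ec (β*θ) c).
    { assert (β * θ <= θ) by nra. assert (0 <= β * θ) by nra.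
      apply Rmult_lt_0_compat; apply Ec_pos; lra. }
    pose proof (Fc_nonpos β θ c ltac:(lra) N). lra.
  - assert (Hbt : 1 - β * θ >= 1 - β) by nra.
    assert (Hc1 : 1 + c >= 1 - β * θ) by lra.
    assert (E1 : Ec θ c >= 1 - β).
    { assert (2 * θ * (1 + c) >= 2 * θ * (1 - β * θ)) by nra.
      assert (2 * θ * (1 - β * θ) >= 1 * (1 - β)) by nra. nra. }
    assert (E2 : Ec (β * θ) c >= (1 - β) ^ 2).
    { assert (0 <= 2 * β * θ * (1 + c)) by (assert (0 <= β * θ) by nra; nra).
      assert ((1 - β * θ) ^ 2 >= (1 - β) ^ 2) by nra. nra. }
    assert (E12 : Ec θ c * Ec (β * θ) c >= (1 - β) ^ 3).
    { assert (0 <= (1-β)) by lra. assert (0 <= (1-β)^2) by nra.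
      replace ((1-β)^3) with ((1-β) * (1-β)^2) by ring. apply Rle_ge, Rmult_le_compat; lra. }
    assert (0 < (1-β)^3) by (apply pow_lt; lra).
    unfold Fc. apply le_div_l; [lra|]. nra.
Qed.

Lemma Fc_upper_1 θ r c : 0 < r -> r <= 1 -> θ = 1 - r ^ 2 -> 1/2 <= θ -> -1 <= c <= 1 ->
  Fc 1 θ c <= 2 / r ^ 3.
Proof.
  intros Hr Hr1 Hθ Hθ2 Hc.
  assert (Hr3 : 0 < r ^ 3) by (apply pow_lt; lra).
  assert (Hk2 : 2 / r ^ 3 * r ^ 3 = 2) by (field; lra).
  assert (Hk : 0 < 2 / r ^ 3) by (apply Rdiv_lt_0_compat; lra).
  set (k := 2 / r ^ 3) in *.
  unfold Fc. rewrite Rmult_1_l.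
  assert (HE : Ec θ c = (θ + c) ^ 2 + (1 - c ^ 2)) by (unfold Ec; ring).
  assert (0 < r ^ 2) by nra.
  assert (HEp : 0 < Ec θ c) by (apply Ec_pos; lra).
  destruct (Rle_dec (c + θ) 0) as [N|N].
  - apply le_div_l; [nra|]. nra.
  - apply le_div_l; [nra|].
    destruct (Rle_dec 0 c) as [P|P].
    + assert (Ec θ c >= 1) by (unfold Ec; nra).
      assert (r ^ 3 <= 1) by (assert (r^3 <= 1^3) by (apply pow_incr; lra); lra).
      assert (k >= 2) by nra.
      assert (Ec θ c * Ec θ c >= 1) by nra. nra.
    + (* s^2 = 1 - c^2 >= 1 - θ^2 >= r^2 *)
      assert (Hs : 1 - c ^ 2 >= r ^ 2) by nra.
      set (t := c + θ) in *. set (S2 := 1 - c ^ 2) in *.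
      assert (A1 : t ^ 2 + S2 >= t ^ 2 + r ^ 2) by lra.
      assert (A2 : t ^ 2 + r ^ 2 >= 2 * t * r) by (pose proof (pow2_ge_0 (t - r)); nra).
      assert (A3 : (t ^ 2 + r ^ 2) ^ 2 >= 2 * t * r ^ 3).
      { assert (0 < t) by (apply Rnot_le_lt; exact N).
        replace ((t ^ 2 + r ^ 2) ^ 2) with ((t ^ 2 + r ^ 2) * (t ^ 2 + r ^ 2)) by ring.
        replace (2 * t * r ^ 3) with ((2 * t * r) * (r ^ 2)) by ring.
        apply Rle_ge, Rmult_le_compat; nra. }
      assert (A4 : (t ^ 2 + S2) ^ 2 >= (t ^ 2 + r ^ 2) ^ 2) by nra.
      rewrite HE. fold t S2.
      assert (t * r ^ 3 <= 2 * (t ^ 2 + S2) ^ 2) by nra.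
      assert (k * ((t ^ 2 + S2) * (t ^ 2 + S2)) * r ^ 3 = 2 * (t ^ 2 + S2) ^ 2) by (rewrite <- Hk2; ring).
      apply (Rmult_le_reg_r (r ^ 3)); [exact Hr3|]. replace (θ + c) with t by (unfold t; ring). lra.
Qed.

Lemma Fc_neg_aux β θ ε c : 0 <= β <= 1 -> 0 < ε <= 1/2 -> θ = 1 - ε -> -1 <= c <= -1 + ε ^ 2 / 2 ->
  0 < Ec θ c /\ Ec θ c <= 2 * ε ^ 2 /\ 0 < Ec (β * θ) c /\ Ec (β * θ) c = (c + β * θ) ^ 2 + (1 - c ^ 2) /\
  1 - c ^ 2 <= ε ^ 2 /\ c + β * θ <= - ε / 2 /\ -2 <= c + β * θ.
Proof.
  intros Hb He Ht Hc.
  assert (Hs : 1 - c ^ 2 <= ε ^ 2).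
  { replace (1 - c^2) with ((1 - c) * (1 + c)) by ring.
    assert (0 <= 1 + c) by lra. assert (1 - c <= 2) by lra. nra. }
  assert (0 <= β * θ <= θ) by (split; nra). assert (ε ^ 2 <= 1/4) by nra.
  split; [apply Ec_pos; lra|]. split.
  { assert (Ec θ c = (θ + c) ^ 2 + (1 - c ^ 2)) by (unfold Ec; ring).
    assert (-ε <= θ + c <= 0) by nra. assert ((θ + c) ^ 2 <= ε ^ 2) by nra. lra. }
  split; [apply Ec_pos; lra|]. split; [unfold Ec; ring|]. split; [exact Hs|].
  split; [|lra].
  assert (β * θ <= 1 - ε) by nra. nra.
Qed.

Lemma Fc_neg β θ ε c : 0 <= β <= 1 -> 0 < ε <= 1/2 -> θ = 1 - ε -> -1 <= c <= -1 + ε ^ 2 / 2 ->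
  Fc β θ c <= - (1 / (20 * ε ^ 2)).
Proof.
  intros Hb He Ht Hc.
  destruct (Fc_neg_aux β θ ε c Hb He Ht Hc) as [P1 [B1 [P2 [E2 [Hs [T1 T2]]]]]].
  set (t := c + β * θ) in *.
  assert (Hk : 1 / (20 * ε ^ 2) * (20 * ε ^ 2) = 1) by (field; lra).
  set (k := 1 / (20 * ε ^ 2)) in *.
  assert (Hε2 : 0 < ε ^ 2) by nra.
  assert (B2 : Ec (β * θ) c <= 5 * t ^ 2) by nra.
  assert (B12 : Ec θ c * Ec (β * θ) c <= 10 * ε ^ 2 * t ^ 2).
  { replace (10 * ε ^ 2 * t ^ 2) with ((2 * ε ^ 2) * (5 * t ^ 2)) by ring.
    apply Rmult_le_compat; lra. }
  assert (10 * ε ^ 2 * t ^ 2 <= - 20 * ε ^ 2 * t) by nra.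
  unfold Fc. fold t. apply le_div_l; [nra|].
  assert (- k * (Ec θ c * Ec (β * θ) c) * (20 * ε ^ 2) >= t * (20 * ε ^ 2)).
  { replace (- k * (Ec θ c * Ec (β * θ) c) * (20 * ε ^ 2)) with (- (Ec θ c * Ec (β * θ) c)) by
      (rewrite <- (Rmult_1_l (Ec θ c * Ec (β * θ) c)) at 1; rewrite <- Hk; ring). nra. }
  apply (Rmult_le_reg_r (20 * ε ^ 2)); [lra|]. lra.
Qed.

Lemma Fc_neg1 θ ε c : 0 < ε <= 1/2 -> θ = 1 - ε -> -1 <= c <= -1 + ε ^ 2 / 2 ->
  Fc 1 θ c <= - (1 / (8 * ε ^ 3)).
Proof.
  intros He Ht Hc.
  destruct (Fc_neg_aux 1 θ ε c ltac:(lra) He Ht Hc) as [P1 [B1 [P2 [E2 [Hs [T1 T2]]]]]].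
  rewrite Rmult_1_l in *.
  set (t := c + θ) in *.
  assert (Hk : 1 / (8 * ε ^ 3) * (8 * ε ^ 3) = 1) by (field; lra).
  set (k := 1 / (8 * ε ^ 3)) in *.
  assert (Hε3 : 0 < ε ^ 3) by (apply pow_lt; lra).
  assert (B12 : Ec θ c * Ec θ c <= 4 * ε ^ 4).
  { replace (4 * ε ^ 4) with ((2 * ε ^ 2) * (2 * ε ^ 2)) by ring. apply Rmult_le_compat; lra. }
  assert (4 * ε ^ 4 <= - 8 * ε ^ 3 * t) by nra.
  unfold Fc. rewrite Rmult_1_l. fold t. apply le_div_l; [nra|].
  assert (- k * (Ec θ c * Ec θ c) * (8 * ε ^ 3) >= t * (8 * ε ^ 3)).
  { replace (- k * (Ec θ c * Ec θ c) * (8 * ε ^ 3)) with (- (Ec θ c * Ec θ c)) by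
      (rewrite <- (Rmult_1_l (Ec θ c * Ec θ c)) at 1; rewrite <- Hk; ring). nra. }
  apply (Rmult_le_reg_r (8 * ε ^ 3)); [lra|]. lra.
Qed.

Lemma Fc_sym β θ c : Fc β (- θ) (- c) = - Fc β θ c.
Proof.
  unfold Fc. replace (Ec (- θ) (- c)) with (Ec θ c) by (unfold Ec; ring).
  replace (Ec (β * - θ) (- c)) with (Ec (β * θ) c) by (unfold Ec; ring).
  unfold Rdiv. ring.
Qed.

Lemma sign_near m M β : 0 < m -> 0 < M -> 0 <= β <= 1 ->
  exists δ, 0 < δ <= 1/2 /\ forall ε, 0 < ε <= δ -> exists P N, 0 <= P /\ 0 <= N /\
    2 * PI * M * P < m * ε * N /\
    (forall c, -1 <= c <= 1 -> Fc β (1 - ε) c <= P) /\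
    (forall c, -1 <= c <= -1 + ε ^ 2 / 2 -> Fc β (1 - ε) c <= - N).
Proof.
  intros Hm HM Hb. pose proof PI_RGT_0 as Hpi.
  destruct (Rlt_le_dec β 1) as [Hb1|Hb1].
  - set (P := 2 / (1 - β) ^ 3).
    assert (HP : 0 < P) by (apply Rdiv_lt_0_compat; [lra|apply pow_lt; lra]).
    set (δ := Rmin (1/2) (m / (80 * PI * M * P))).
    assert (Hq : 0 < m / (80 * PI * M * P)). { apply Rdiv_lt_0_compat; [lra|]. apply Rmult_lt_0_compat; [|exact HP]. apply Rmult_lt_0_compat; lra. }
    exists δ. split; [split; [apply Rmin_glb_lt; lra|apply Rmin_l]|].
    intros ε He. exists P, (1 / (20 * ε ^ 2)).
    assert (He2 : 0 < ε ^ 2) by nra.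
    split; [lra|]. split; [left; apply Rdiv_lt_0_compat; lra|]. split; [|split].
    + assert (Hd : ε <= m / (80 * PI * M * P)) by (eapply Rle_trans; [apply He|apply Rmin_r]).
      assert (A : 2 * PI * M * P * (20 * ε) <= m / 2).
      { replace (m / 2) with (40 * PI * M * P * (m / (80 * PI * M * P))) by (field; repeat split; lra).
        assert (0 < 40 * PI * M * P) by (apply Rmult_lt_0_compat; [|exact HP]; apply Rmult_lt_0_compat; lra). nra. }
      assert (B : m * ε * (1 / (20 * ε ^ 2)) * (20 * ε) = m) by (field; lra).
      apply (Rmult_lt_reg_r (20 * ε)); [lra|]. lra.
    + intros c Hc. assert (ε <= 1/2) by (eapply Rle_trans; [apply He|apply Rmin_l]). apply Fc_upper_lt1; lra.
    + intros c Hc. apply (Fc_neg β (1 - ε) ε c); auto; try lra.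
      split; [lra|]. eapply Rle_trans; [apply He|apply Rmin_l].
  - assert (β = 1) by lra. subst β.
    set (q := m / (64 * PI * M)).
    assert (Hq : 0 < q). { unfold q. apply Rdiv_lt_0_compat; [lra|]. apply Rmult_lt_0_compat; [|lra]. apply Rmult_lt_0_compat; lra. }
    set (δ := Rmin (1/2) (q ^ 2)).
    exists δ. split; [split; [apply Rmin_glb_lt; nra|apply Rmin_l]|].
    intros ε He. set (r := sqrt ε).
    assert (Hr : 0 < r) by (apply sqrt_lt_R0; lra).
    assert (Hr2 : r ^ 2 = ε) by (apply pow2_sqrt; lra).
    assert (Hrq : r <= q).
    { assert (ε <= q ^ 2) by (eapply Rle_trans; [apply He|apply Rmin_r]). nra. }
    assert (Hε : ε <= 1/2) by (eapply Rle_trans; [apply He|apply Rmin_l]).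
    assert (Hr1 : r <= 1) by nra.
    exists (2 / r ^ 3), (1 / (8 * ε ^ 3)).
    assert (Hr3 : 0 < r ^ 3) by (apply pow_lt; lra).
    assert (He3 : 0 < ε ^ 3) by (apply pow_lt; lra).
    split; [left; apply Rdiv_lt_0_compat; lra|]. split; [left; apply Rdiv_lt_0_compat; lra|]. split; [|split].
    + assert (A : 32 * PI * M * r <= m / 2).
      { replace (m / 2) with (32 * PI * M * q) by (unfold q; field; repeat split; lra).
        assert (0 < 32 * PI * M) by (apply Rmult_lt_0_compat; [|lra]; apply Rmult_lt_0_compat; lra). nra. }
      assert (B1 : 2 * PI * M * (2 / r ^ 3) * (8 * r ^ 7) = 32 * PI * M * r ^ 4) by (field; lra).
      assert (B2 : m * ε * (1 / (8 * ε ^ 3)) * (8 * r ^ 7) = m * r ^ 3).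
      { rewrite <- Hr2. field. lra. }
      assert (Hr7 : 0 < 8 * r ^ 7) by (assert (0 < r ^ 7) by (apply pow_lt; lra); lra).
      apply (Rmult_lt_reg_r (8 * r ^ 7)); [lra|]. rewrite B1, B2.
      replace (32 * PI * M * r ^ 4) with ((32 * PI * M * r) * r ^ 3) by ring.
      apply Rmult_lt_compat_r; lra.
    + intros c Hc. apply (Fc_upper_1 (1 - ε) r c); auto; lra.
    + intros c Hc. apply (Fc_neg1 (1 - ε) ε c); auto; lra.
Qed.

Lemma cos_lb u : 0 <= u <= 1 -> 1 - u ^ 2 / 2 <= cos u.
Proof.
  intros Hu. destruct (Req_dec u 0) as [E|E].
  - subst. rewrite cos_0. lra.
  - replace u with (2 * (u / 2)) at 2 by field. rewrite cos_2a_sin.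
    assert (0 < u / 2) by lra.
    pose proof (sin_lt_x (u / 2) H).
    assert (0 <= sin (u / 2)) by (apply sin_ge_0; pose proof PI2_1; lra).
    nra.
Qed.

Lemma exRInt_sub (h : R -> R) a b x y : (forall z, a <= z <= b -> continuous h z) -> a <= x <= b -> a <= y <= b -> ex_RInt h x y.
Proof.
  intros H Hx Hy. apply (ex_RInt_continuous (V := R_CompleteNormedModule)).
  intros z Hz. apply H. split.
  - eapply Rle_trans; [|apply Hz]. apply Rmin_glb; lra.
  - eapply Rle_trans; [apply Hz|]. apply Rmax_lub; lra.
Qed.

Lemma RInt_upper (h : R -> R) a b B : a <= b -> ex_RInt h a b -> (forall x, a <= x <= b -> h x <= B) -> RInt h a b <= B * (b - a).
Proof.
  intros Hab Hex H. eapply Rle_trans.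
  - apply RInt_le with (g := fun _ => B); auto.
    + apply (ex_RInt_const (V := R_CompleteNormedModule)).
    + intros x Hx; apply H; lra.
  - rewrite (RInt_const (V := R_CompleteNormedModule)). unfold scal; simpl. unfold mult; simpl. lra.
Qed.

Lemma RInt_window (h : R -> R) a b c d B W : a <= b -> b <= c -> c <= d ->
  (forall x, a <= x <= d -> continuous h x) -> 0 <= B ->
  (forall x, a <= x <= d -> h x <= B) -> (forall x, b <= x <= c -> h x <= - W) ->
  RInt h a d <= B * (d - a) - W * (c - b).
Proof.
  intros H1 H2 H3 Hc HB Hup Hw.
  assert (E1 : ex_RInt h a b) by (apply (exRInt_sub h a d); auto; lra).
  assert (E2 : ex_RInt h b c) by (apply (exRInt_sub h a d); auto; lra).
  assert (E3 : ex_RInt h c d) by (apply (exRInt_sub h a d); auto; lra).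
  rewrite <- (RInt_Chasles (V := R_CompleteNormedModule) h a c d); auto.
  2: { apply (exRInt_sub h a d); auto; lra. }
  rewrite <- (RInt_Chasles (V := R_CompleteNormedModule) h a b c); auto.
  unfold plus; simpl.
  pose proof (RInt_upper h a b B H1 E1 ltac:(intros; apply Hup; lra)).
  pose proof (RInt_upper h b c (-W) H2 E2 ltac:(intros; apply Hw; lra)).
  pose proof (RInt_upper h c d B H3 E3 ltac:(intros; apply Hup; lra)).
  nra.
Qed.

Lemma Fre_Fc σ κ β θ w : Fre σ κ β θ w = Fc β θ (cos w) * g_y σ κ w.
Proof. reflexivity. Qed.

Lemma D1_Ec θ w : D1 θ w = Ec θ (cos w).
Proof. reflexivity. Qed.

Section Est.
Variable σ : R.
Variable κ : nat -> R.
Hypothesis Hσ : 0 < σ.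
Hypothesis Hκ : ex_series (fun s => Rabs (κ s)).
Hypothesis Hnz : forall z : C, Cmod z <= 1 -> kappa_fun κ z <> RtoC 0.

Let g := g_y σ κ.

Lemma g_bounds : exists m M, 0 < m /\ m <= M /\ forall w, -PI <= w <= PI -> m <= g w <= M.
Proof.
  pose proof PI_RGT_0.
  destruct (continuity_ab_min g (-PI) PI ltac:(lra) (fun c _ => g_y_cont σ κ Hκ c)) as [a [Ha _]].
  destruct (continuity_ab_maj g (-PI) PI ltac:(lra) (fun c _ => g_y_cont σ κ Hκ c)) as [b [Hb _]].
  exists (g a), (g b). split; [apply g_y_pos; auto|]. split.
  - eapply Rle_trans; [apply (Ha 0)|apply (Hb 0)]; lra.
  - intros w Hw; split; auto.
Qed.

Lemma cos_window_pi ε w : 0 < ε <= 1/2 -> PI - ε <= w <= PI -> -1 <= cos w <= -1 + ε ^ 2 / 2.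
Proof.
  intros He Hw. split; [apply COS_bound|].
  replace w with (- (PI - w) + PI) by ring. rewrite neg_cos, cos_neg.
  pose proof (cos_lb (PI - w) ltac:(lra)).
  assert ((PI - w) ^ 2 <= ε ^ 2) by (apply pow_incr; lra). lra.
Qed.

Lemma cos_window_0 ε w : 0 < ε <= 1/2 -> 0 <= w <= ε -> -1 <= - cos w <= -1 + ε ^ 2 / 2.
Proof.
  intros He Hw. pose proof (COS_bound w). split; [lra|].
  pose proof (cos_lb w ltac:(lra)).
  assert (w ^ 2 <= ε ^ 2) by (apply pow_incr; lra). lra.
Qed.

Lemma sign_f β : 0 <= β <= 1 -> exists δ, 0 < δ <= 1/2 /\ forall ε, 0 < ε <= δ ->
  IPhi (Fre σ κ β) (1 - ε) < 0 /\ 0 < IPhi (Fre σ κ β) (- (1 - ε)).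
Proof.
  intros Hb. destruct g_bounds as [m [M [Hm [HmM Hg]]]].
  destruct (sign_near m M β Hm ltac:(lra) Hb) as [δ [Hδ Hall]].
  exists δ. split; auto. intros ε He.
  destruct (Hall ε He) as [P [N [HP [HN [Hcmp [Hup Hwin]]]]]].
  pose proof PI_RGT_0 as Hpi. pose proof PI2_1.
  assert (Hε : 0 < ε <= 1/2) by lra.
  assert (HT1 : in_Theta (1 - ε)) by (unfold in_Theta; lra).
  assert (HT2 : in_Theta (- (1 - ε))) by (unfold in_Theta; lra).
  assert (HPM : 0 <= P * M) by nra.
  split.
  - unfold IPhi.
    eapply Rle_lt_trans.
    + apply (RInt_window (fun w => Fre σ κ β (1 - ε) w) (-PI) (PI - ε) PI PI (P * M) (N * m)); try lra.
      * intros x _. apply c2d_cont2. apply (Sm_C0 _ (Sm_Fre σ κ Hκ β Hb)); auto.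
      * intros x Hx. rewrite Fre_Fc. pose proof (Hg x Hx). fold g.
        pose proof (Hup (cos x) (COS_bound x)).
        destruct (Rle_dec (Fc β (1 - ε) (cos x)) 0); nra.
      * intros x Hx. rewrite Fre_Fc. pose proof (Hg x ltac:(lra)). fold g.
        pose proof (Hwin (cos x) (cos_window_pi ε x Hε Hx)). nra.
    + nra.
  - assert (HR : RInt (fun w => - Fre σ κ β (- (1 - ε)) w) (-PI) PI < 0).
    { eapply Rle_lt_trans.
      + apply (RInt_window (fun w => - Fre σ κ β (- (1 - ε)) w) (-PI) 0 ε PI (P * M) (N * m)); try lra.
        * intros x _. apply (c2d_cont2 (fun u v => - Fre σ κ β u v) (-(1-ε)) x). apply (Sm_C0 _ (Sm_opp _ (Sm_Fre σ κ Hκ β Hb))); auto.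
        * intros x Hx. rewrite Fre_Fc. pose proof (Hg x Hx). fold g.
          replace (cos x) with (- - cos x) by ring. rewrite Fc_sym.
          assert (Hcx : -1 <= - cos x <= 1) by (pose proof (COS_bound x); lra).
          pose proof (Hup (- cos x) Hcx).
          destruct (Rle_dec (Fc β (1 - ε) (- cos x)) 0); nra.
        * intros x Hx. rewrite Fre_Fc. pose proof (Hg x ltac:(lra)). fold g.
          replace (cos x) with (- - cos x) by ring. rewrite Fc_sym.
          pose proof (Hwin (- cos x) (cos_window_0 ε x Hε Hx)). nra.
      + nra. }
    unfold IPhi. rewrite (RInt_opp (V := R_CompleteNormedModule)) in HR.
    + unfold opp in HR; simpl in HR. change (0 < RInt (Fre σ κ β (- (1 - ε))) (- PI) PI). lra.
    + apply C0_exRInt; auto. apply Sm_C0, Sm_Fre; auto.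
Qed.
End Est.

Lemma RInt_odd (h : R -> R) : (forall x, h (- x) = - h x) -> ex_RInt h PI (- PI) -> RInt h (- PI) PI = 0.
Proof.
  intros Ho Hex.
  assert (H1 : is_RInt h (- - PI) (- PI) (RInt h PI (- PI))).
  { rewrite Ropp_involutive. apply (RInt_correct (V := R_CompleteNormedModule)); auto. }
  pose proof (is_RInt_comp_opp (V := R_NormedModule) h (- PI) PI _ H1) as H2.
  assert (H3 : is_RInt h (- PI) PI (RInt h PI (- PI))).
  { eapply is_RInt_ext; [|exact H2]. intros x _. unfold opp; simpl. rewrite Ho. ring. }
  apply (is_RInt_unique (V := R_CompleteNormedModule)) in H3.
  pose proof (opp_RInt_swap (V := R_CompleteNormedModule) h PI (-PI) Hex) as H4.
  unfold opp in H4; simpl in H4. lra.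
Qed.

Lemma Im_zero σ κ β θ : ex_series (fun s => Rabs (κ s)) -> 0 <= β <= 1 -> in_Theta θ -> IPhi (Fim σ κ β) θ = 0.
Proof.
  intros Hκ Hb Hθ. unfold IPhi. apply RInt_odd.
  - intros x. unfold Fim, D1. rewrite sin_neg, cos_neg, g_y_even. unfold Rdiv. ring.
  - apply C0_exRInt; auto. apply Sm_C0, Sm_Fim; auto.
Qed.

Lemma IPhi_cont φ θ : Sm φ -> in_Theta θ -> continuity_pt (IPhi φ) θ.
Proof.
  intros A Hθ. apply continuity_pt_filterlim. apply (ex_derive_continuous (IPhi φ)).
  eexists; apply IPhi_derive; auto.
Qed.

Lemma f_zero_iff σ κ β θ : ex_series (fun s => Rabs (κ s)) -> 0 <= β <= 1 -> in_Theta θ ->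
  (f_est σ κ θ β = RtoC 0 <-> IPhi (Fre σ κ β) θ = 0).
Proof.
  intros Hκ Hb Hθ. rewrite f_est_eq, Im_zero; auto. unfold RtoC. split.
  - intros E. injection E; intros; lra.
  - intros E. rewrite E. f_equal; ring.
Qed.

Section Main.
Variable σ : R.
Variable κ : nat -> R.
Hypothesis Hσ : 0 < σ.
Hypothesis Hκ : ex_series (fun s => Rabs (κ s)).
Hypothesis Hnz : forall z : C, Cmod z <= 1 -> kappa_fun κ z <> RtoC 0.

Lemma Theta0_nonempty β : 0 <= β <= 1 -> exists θ, Theta0 σ κ β θ.
Proof.
  intros Hb. destruct (sign_f σ κ Hσ Hκ Hnz β Hb) as [δ [Hδ H]].
  destruct (H δ ltac:(lra)) as [H1 H2].
  set (F := fun t => - IPhi (Fre σ κ β) t).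
  destruct (Ranalysis5.IVT_interv F (- (1 - δ)) (1 - δ)) as [z [Hz Fz]].
  - intros a Ha. unfold F. apply continuity_pt_opp. apply IPhi_cont; [apply Sm_Fre; auto|].
    unfold in_Theta; lra.
  - lra.
  - unfold F; lra.
  - unfold F; lra.
  - exists z. assert (Hzt : in_Theta z) by (unfold in_Theta; lra). split; auto.
    apply f_zero_iff; auto. unfold F in Fz. lra.
Qed.

Lemma Theta0_compact β : 0 <= β <= 1 -> compact (Theta0 σ κ β).
Proof.
  intros Hb. destruct (sign_f σ κ Hσ Hκ Hnz β Hb) as [δ [Hδ H]].
  set (X := fun c => - (1 - δ) <= c <= 1 - δ).
  assert (Inc : included (Theta0 σ κ β) X).
  { intros θ [Hθ Z]. apply f_zero_iff in Z; auto. unfold X.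
    destruct (Rle_dec θ (1 - δ)) as [A|A]; destruct (Rle_dec (- (1 - δ)) θ) as [B|B]; try (split; lra); exfalso.
    - destruct (H (1 + θ) ltac:(unfold in_Theta in Hθ; lra)) as [_ H2].
      replace (- (1 - (1 + θ))) with θ in H2 by ring. lra.
    - destruct (H (1 - θ) ltac:(unfold in_Theta in Hθ; lra)) as [H1 _].
      replace (1 - (1 - θ)) with θ in H1 by ring. lra. }
  apply compact_P4 with X; [apply compact_P3| |exact Inc].
  unfold closed_set, open_set, complementary, neighbourhood, included, disc.
  intros x Hx.
  destruct (Rle_dec x (1 - δ)) as [A|A]; [destruct (Rle_dec (- (1 - δ)) x) as [B|B]|].
  - assert (Hxt : in_Theta x) by (unfold in_Theta; lra).
    assert (NZ : IPhi (Fre σ κ β) x <> 0).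
    { intros E. apply Hx. split; auto. apply f_zero_iff; auto. }
    assert (Hc := IPhi_cont _ x (Sm_Fre σ κ Hκ β Hb) Hxt).
    pose proof (proj1 (continuity_pt_locally (IPhi (Fre σ κ β)) x) Hc) as Hc2. clear Hc. rename Hc2 into Hc.
    destruct (Hc (mkposreal _ (Rabs_pos_lt _ NZ))) as [d Hd].
    exists d. intros y Hy [Hyt Zy]. apply f_zero_iff in Zy; auto.
    specialize (Hd y Hy). simpl in Hd. rewrite Zy in Hd.
    replace (0 - IPhi (Fre σ κ β) x) with (- IPhi (Fre σ κ β) x) in Hd by ring.
    rewrite Rabs_Ropp in Hd. lra.
  - assert (Hp : 0 < - (1 - δ) - x) by lra.
    exists (mkposreal _ Hp). intros y Hy Zy. apply Inc in Zy. unfold X in Zy. simpl in Hy.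
    apply Rabs_def2 in Hy. lra.
  - assert (Hp : 0 < x - (1 - δ)) by lra.
    exists (mkposreal _ Hp). intros y Hy Zy. apply Inc in Zy. unfold X in Zy. simpl in Hy.
    apply Rabs_def2 in Hy. lra.
Qed.

End Main.

Section L.
Variable σ : R.
Variable κ : nat -> R.
Hypothesis Hσ : 0 < σ.
Hypothesis Hκ : ex_series (fun s => Rabs (κ s)).
Hypothesis Hnz : forall z : C, Cmod z <= 1 -> kappa_fun κ z <> RtoC 0.

Definition GL u v := g_y σ κ v / D1 u v.

Lemma Lbar_eq θ : Lbar σ κ θ = IPhi GL θ.
Proof. unfold Lbar, IPhi, GL. apply RInt_ext. intros x _. rewrite Cmod_D1. reflexivity. Qed.

Lemma Sm_GL : Sm GL.
Proof.
  apply Sm_ext with (fun u v => g_y σ κ v * / (fun u v => D1 (1 * u) v) u v).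
  { intros; unfold GL; rewrite Rmult_1_l; reflexivity. }
  apply Sm_mult; [apply Sm_g; auto|]. apply Sm_inv; [|apply Sm_D1].
  intros θ w Hθ. rewrite Rmult_1_l. apply Rgt_not_eq, D1_pos; exact Hθ.
Qed.

Lemma dT_GL θ w : in_Theta θ -> dT GL θ w = -2 * Fre σ κ 1 θ w.
Proof.
  intros Hθ. unfold dT, GL, Fre. apply is_derive_unique.
  pose proof (D1_pos θ w Hθ) as HD. rewrite Rmult_1_l. unfold D1 in *.
  auto_derive; [lra|]. field. lra.
Qed.

Lemma Lbar_derive θ : in_Theta θ -> is_derive (IPhi GL) θ (-2 * IPhi (Fre σ κ 1) θ).
Proof.
  intros Hθ. replace (-2 * IPhi (Fre σ κ 1) θ) with (IPhi (dT GL) θ).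
  - apply IPhi_derive; auto. apply Sm_GL.
  - unfold IPhi. rewrite (RInt_ext _ (fun w => scal (-2) (Fre σ κ 1 θ w))).
    + rewrite (RInt_scal (V := R_CompleteNormedModule)); [reflexivity|].
      apply C0_exRInt; auto. apply Sm_C0, Sm_Fre; auto; lra.
    + intros x _. rewrite dT_GL; auto.
Qed.

Lemma div_ge m A g D : 0 < D -> D <= A -> 0 <= m <= g -> m / A <= g / D.
Proof.
  intros HD HA Hm. unfold Rdiv. apply Rmult_le_compat; try lra.
  - left; apply Rinv_0_lt_compat; lra.
  - apply Rinv_le_contravar; lra.
Qed.

Lemma Lbar_large : exists m M, 0 < m /\ 0 < M /\ IPhi GL 0 <= 2 * PI * M /\
  forall ε, 0 < ε <= 1/2 -> m / (2 * ε) <= IPhi GL (1 - ε) /\ m / (2 * ε) <= IPhi GL (- (1 - ε)).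
Proof.
  destruct (g_bounds σ κ Hσ Hκ Hnz) as [m [M [Hm [HmM Hg]]]].
  pose proof PI_RGT_0 as Hpi. pose proof PI2_1.
  exists m, M. split; auto. split; [lra|]. split.
  { unfold IPhi. replace (2 * PI * M) with (M * (PI - - PI)) by ring.
    apply RInt_upper; [lra| |].
    - apply C0_exRInt; [apply Sm_C0, Sm_GL|unfold in_Theta; lra].
    - intros x Hx. unfold GL, D1. replace (1 + 2 * 0 * cos x + 0 ^ 2) with 1 by ring.
      rewrite Rdiv_1_r. apply Hg; auto. }
  intros ε He.
  assert (Hk : m / (2 * ε ^ 2) * ε = m / (2 * ε)) by (field; lra).
  split.
  - assert (HR : RInt (fun w => - GL (1 - ε) w) (-PI) PI <= 0 * (PI - - PI) - (m / (2 * ε ^ 2)) * (PI - (PI - ε))).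
    { apply RInt_window; try lra.
      - intros x _. apply (c2d_cont2 (fun u v => - GL u v)). apply (Sm_C0 _ (Sm_opp _ Sm_GL)). unfold in_Theta; lra.
      - intros x Hx. unfold GL. assert (0 < D1 (1 - ε) x) by (apply D1_pos; lra).
        pose proof (Hg x Hx). assert (0 <= g_y σ κ x / D1 (1 - ε) x) by (apply Rdiv_le_0_compat; lra). lra.
      - intros x Hx. unfold GL. rewrite D1_Ec.
        destruct (Fc_neg_aux 1 (1 - ε) ε (cos x) ltac:(lra) He eq_refl (cos_window_pi ε x He Hx)) as [P1 [B1 _]].
        pose proof (Hg x ltac:(lra)).
        pose proof (div_ge m (2 * ε ^ 2) (g_y σ κ x) (Ec (1 - ε) (cos x)) P1 B1 ltac:(lra)). lra. }
    unfold IPhi. rewrite (RInt_opp (V := R_CompleteNormedModule)) in HR.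
    + unfold opp in HR; simpl in HR. change (RInt (GL (1 - ε)) (- PI) PI) with (RInt (fun w => GL (1 - ε) w) (- PI) PI) in HR.
      replace (ε * (ε * 1)) with (ε ^ 2) in HR by ring. lra.
    + apply C0_exRInt; [apply Sm_C0, Sm_GL|unfold in_Theta; lra].
  - assert (HR : RInt (fun w => - GL (- (1 - ε)) w) (-PI) PI <= 0 * (PI - - PI) - (m / (2 * ε ^ 2)) * (ε - 0)).
    { apply RInt_window; try lra.
      - intros x _. apply (c2d_cont2 (fun u v => - GL u v)). apply (Sm_C0 _ (Sm_opp _ Sm_GL)). unfold in_Theta; lra.
      - intros x Hx. unfold GL. assert (0 < D1 (- (1 - ε)) x) by (apply D1_pos; lra).
        pose proof (Hg x Hx). assert (0 <= g_y σ κ x / D1 (- (1 - ε)) x) by (apply Rdiv_le_0_compat; lra). lra.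
      - intros x Hx. unfold GL. rewrite D1_Ec.
        replace (Ec (- (1 - ε)) (cos x)) with (Ec (1 - ε) (- cos x)) by (unfold Ec; ring).
        destruct (Fc_neg_aux 1 (1 - ε) ε (- cos x) ltac:(lra) He eq_refl (cos_window_0 ε x He Hx)) as [P1 [B1 _]].
        pose proof (Hg x ltac:(lra)).
        pose proof (div_ge m (2 * ε ^ 2) (g_y σ κ x) (Ec (1 - ε) (- cos x)) P1 B1 ltac:(lra)). lra. }
    unfold IPhi. rewrite (RInt_opp (V := R_CompleteNormedModule)) in HR.
    + unfold opp in HR; simpl in HR. change (RInt (GL (- (1 - ε))) (- PI) PI) with (RInt (fun w => GL (- (1 - ε)) w) (- PI) PI) in HR. replace (ε * (ε * 1)) with (ε ^ 2) in HR by ring.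
      lra.
    + apply C0_exRInt; [apply Sm_C0, Sm_GL|unfold in_Theta; lra].
Qed.

End L.

Section M.
Variable σ : R.
Variable κ : nat -> R.
Hypothesis Hσ : 0 < σ.
Hypothesis Hκ : ex_series (fun s => Rabs (κ s)).
Hypothesis Hnz : forall z : C, Cmod z <= 1 -> kappa_fun κ z <> RtoC 0.

Lemma min_exists : exists θ, in_Theta θ /\ forall t, in_Theta t -> Lbar σ κ θ <= Lbar σ κ t.
Proof.
  destruct (Lbar_large σ κ Hσ Hκ Hnz) as [m [M [Hm [HM [H0 Hall]]]]].
  pose proof PI_RGT_0 as Hpi.
  set (e0 := Rmin (1/2) (m / (8 * PI * M))).
  assert (Hq : 0 < m / (8 * PI * M)).
  { apply Rdiv_lt_0_compat; [lra|]. apply Rmult_lt_0_compat; [|lra]. apply Rmult_lt_0_compat; lra. }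
  assert (He0 : 0 < e0 <= 1/2) by (split; [apply Rmin_glb_lt; lra|apply Rmin_l]).
  assert (Big : forall ε, 0 < ε <= e0 -> IPhi (GL σ κ) 0 < IPhi (GL σ κ) (1 - ε) /\ IPhi (GL σ κ) 0 < IPhi (GL σ κ) (- (1 - ε))).
  { intros ε He.
    assert (Hε : ε <= m / (8 * PI * M)) by (eapply Rle_trans; [apply He|apply Rmin_r]).
    assert (4 * PI * M <= m / (2 * ε)).
    { apply (Rmult_le_reg_r (2 * ε)); [lra|].
      replace (m / (2 * ε) * (2 * ε)) with m by (field; lra).
      assert (Eq : 8 * PI * M * (m / (8 * PI * M)) = m) by (field; repeat split; lra).
      assert (0 < 8 * PI * M) by (apply Rmult_lt_0_compat; [|lra]; apply Rmult_lt_0_compat; lra).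
      assert (8 * PI * M * ε <= 8 * PI * M * (m / (8 * PI * M))) by (apply Rmult_le_compat_l; lra). lra. }
    destruct (Hall ε ltac:(lra)). nra. }
  assert (Hcont : forall c, - (1 - e0) <= c <= 1 - e0 -> continuity_pt (IPhi (GL σ κ)) c).
  { intros c Hc. apply IPhi_cont; [apply Sm_GL; auto|unfold in_Theta; lra]. }
  destruct (continuity_ab_min (IPhi (GL σ κ)) (- (1 - e0)) (1 - e0) ltac:(lra) Hcont) as [θ [Hmin Hθ]].
  exists θ. split; [unfold in_Theta; lra|]. intros t Ht. rewrite !Lbar_eq.
  destruct (Rle_dec t (1 - e0)) as [A|A]; [destruct (Rle_dec (- (1 - e0)) t) as [B|B]|].
  - apply Hmin; lra.
  - pose proof (Hmin 0 ltac:(lra)). unfold in_Theta in Ht.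
    destruct (Big (1 + t) ltac:(lra)) as [_ B2]. replace (- (1 - (1 + t))) with t in B2 by ring. lra.
  - pose proof (Hmin 0 ltac:(lra)). unfold in_Theta in Ht.
    destruct (Big (1 - t) ltac:(lra)) as [B1 _]. replace (1 - (1 - t)) with t in B1 by ring. lra.
Qed.

Lemma min_in_Theta0 θ : in_Theta θ -> (forall t, in_Theta t -> Lbar σ κ θ <= Lbar σ κ t) -> Theta0 σ κ 1 θ.
Proof.
  intros Hθ Hmin. split; auto. apply f_zero_iff; auto; try lra.
  pose proof (Lbar_derive σ κ Hκ θ Hθ) as D.
  apply is_derive_Reals in D.
  set (pr := exist (fun l => derivable_pt_abs (IPhi (GL σ κ)) θ l) _ D : derivable_pt (IPhi (GL σ κ)) θ).
  assert (Z : derive_pt (IPhi (GL σ κ)) θ pr = 0).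
  { apply deriv_minimum with (-1) 1; try (unfold in_Theta in Hθ; lra).
    intros x H1 H2. rewrite <- !Lbar_eq. apply Hmin. unfold in_Theta; lra. }
  simpl in Z. lra.
Qed.

End M.

Theorem proposition4p4 (sigma2 : R) (kappa : nat -> R) :
  0 < sigma2 ->
  kappa 0%nat = 1 ->
  ex_series (fun s => Rabs (kappa s)) ->
  (forall z : C, Cmod z <= 1 -> kappa_fun kappa z <> RtoC 0) ->
  (forall beta : R, 0 <= beta <= 1 ->
     smooth_on_Theta (fun theta => f_est sigma2 kappa theta beta) /\
     (exists theta, Theta0 sigma2 kappa beta theta) /\
     compact (Theta0 sigma2 kappa beta)) /\
  (forall theta : R, in_Theta theta ->
     (forall t : R, in_Theta t -> Lbar sigma2 kappa theta <= Lbar sigma2 kappa t) ->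
     Theta0 sigma2 kappa 1 theta) /\
  (exists theta : R, in_Theta theta /\
     forall t : R, in_Theta t -> Lbar sigma2 kappa theta <= Lbar sigma2 kappa t).
Proof.
  intros Hσ H0 Hκ Hnz. split; [|split].
  - intros β Hb. split; [apply smooth_f; auto|]. split.
    + apply (Theta0_nonempty sigma2 kappa Hσ Hκ Hnz β Hb).
    + apply (Theta0_compact sigma2 kappa Hσ Hκ Hnz β Hb).
  - intros θ Hθ Hmin. apply (min_in_Theta0 sigma2 kappa Hκ θ Hθ Hmin).
  - apply (min_exists sigma2 kappa Hσ Hκ Hnz).
Qed.
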